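(* If $G$ is a connected graph with $\operatorname{im}(G)<\operatorname{reg}(G)=\operatorname{m}(G)$, then $G$ is isomorphic to the $5$-cycle $C_5$.
   Context: $\operatorname{reg}(G)=\max\{j\ge0:\widetilde H_{j-1}(\operatorname{Ind}(G[S]);\Bbbk)\neq0\text{ for some }S\subseteq V(G)\}$ over a fixed field $\Bbbk$ ($\operatorname{Ind}$ = independence complex). $\operatorname{im}(G)$ is the induced matching number and $\operatorname{m}(G)$ the matching number (maximum number of pairwise vertex-disjoint edges). *)

(* Defs.v *)
From HB Require Import structures.
From mathcomp Require Import all_boot all_order all_algebra.
Set Implicit Arguments. Unset Strict Implicit. Unset Printing Implicit Defensive.
Import GRing.Theory.

Section Graphs.
Variable T : finType.
Variable e : rel T.

Definition simple_graph : Prop := symmetric e /\ irreflexive e.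

Definition connected_graph : Prop := forall x y : T, connect e x y.

Definition independent (A : {set T}) : bool :=
  [forall x in A, forall y in A, ~~ e x y].

(* faces of Ind(G[S]) with exactly k vertices (dimension k-1);
   the empty face (k = 0) is included: reduced homology *)
Definition face (S : {set T}) (k : nat) (A : {set T}) : bool :=
  [&& A \subset S, independent A & #|A| == k].

Section Homology.
Variable K : fieldType.
Local Open Scope ring_scope.

Definition chain := {ffun {set T} -> K}.

Definition supported (S : {set T}) (k : nat) (c : chain) : Prop :=
  forall A, c A != 0 -> face S k A.

Definition vsign (v : T) (A : {set T}) : K :=
  (-1) ^+ #|[set u in A | (enum_rank u < enum_rank v)%N]|.

(* simplicial boundary: d(A) = sum_{v in A} sign(v,A) (A \ v) *)
Definition boundary (c : chain) : chain :=
  [ffun B : {set T} => \sum_(v : T | v \notin B) vsign v (v |: B) * c (v |: B)].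

(* \tilde H_{k-1}(Ind(G[S]); K) <> 0 : there is a (k-1)-cycle
   (chain on k-vertex faces) which is not a boundary *)
Definition redhom_nonzero (S : {set T}) (k : nat) : Prop :=
  exists z : chain, [/\ supported S k z, boundary z = 0 &
    ~ (exists c : chain, supported S k.+1 c /\ boundary c = z)].

Definition is_reg (r : nat) : Prop :=
  (exists S : {set T}, redhom_nonzero S r) /\
  (forall (S : {set T}) (j : nat), redhom_nonzero S j -> (j <= r)%N).
End Homology.

Definition is_edge (A : {set T}) : bool :=
  [exists x, exists y, (A == [set x; y]) && e x y].

Definition matching (M : {set {set T}}) : bool :=
  [forall A in M, is_edge A] &&
  [forall A in M, forall B in M, (A != B) ==> [disjoint A & B]].

Definition induced_matching (M : {set {set T}}) : bool :=
  matching M &&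
  [forall A in M, forall B in M, (A != B) ==>
     [forall x in A, forall y in B, ~~ e x y]].

Definition matching_number : nat := \max_(M | matching M) #|M|.
Definition induced_matching_number : nat := \max_(M | induced_matching M) #|M|.

End Graphs.

Definition C5rel (i j : 'I_5) : bool :=
  (val j == (val i).+1 %% 5)%N || (val i == (val j).+1 %% 5)%N.

Definition iso_C5 (T : finType) (e : rel T) : Prop :=
  exists f : T -> 'I_5, bijective f /\ forall x y, e x y = C5rel (f x) (f y).

(* Main.v *)
Require Import Defs.
From mathcomp Require Import all_boot all_order all_algebra.
From Stdlib Require Import Classical.
Set Implicit Arguments. Unset Strict Implicit. Unset Printing Implicit Defensive.
Import GRing.Theory.

Section Hom.
Variable T : finType.
Variable e : rel T.
Hypothesis esy : symmetric e.
Hypothesis eirr : irreflexive e.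
Variable K : fieldType.
Local Open Scope ring_scope.
Implicit Types (c z : chain T K) (A B S : {set T}) (x v y : T).

Definition cone (x : T) (c : chain T K) : chain T K :=
  [ffun A : {set T} => if x \in A then vsign K x A * c (A :\ x) else 0].
Definition nox (x : T) (c : chain T K) := forall A : {set T}, x \in A -> c A = 0.
Definition rest (x : T) (c : chain T K) : chain T K :=
  [ffun A : {set T} => if x \in A then 0 else c A].
Definition link (x : T) (c : chain T K) : chain T K :=
  [ffun B : {set T} => if x \in B then 0 else vsign K x (x |: B) * c (x |: B)].

Lemma vsign_sq (v : T) (A : {set T}) : vsign K v A * vsign K v A = 1.
Proof. by rewrite /vsign -expr2 sqrr_sign. Qed.

Lemma vsign_neq0 (v : T) (A : {set T}) : vsign K v A != 0.
Proof. by rewrite /vsign signr_eq0. Qed.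

Lemma boundaryD c1 c2 : boundary (c1 + c2) = boundary c1 + boundary c2.
Proof.
apply/ffunP=> B; rewrite !ffunE -big_split /=; apply: eq_bigr => v _.
by rewrite ?ffunE mulrDr.
Qed.

Lemma boundaryN c : boundary (- c) = - boundary c.
Proof.
apply/ffunP=> B; rewrite !ffunE -sumrN; apply: eq_bigr => v _.
by rewrite ?ffunE mulrN.
Qed.

Lemma boundaryB c1 c2 : boundary (c1 - c2) = boundary c1 - boundary c2.
Proof. by rewrite boundaryD boundaryN. Qed.

Lemma boundary0 : boundary (0 : chain T K) = 0.
Proof. by apply/ffunP=> B; rewrite !ffunE big1 // => v _; rewrite ?ffunE mulr0. Qed.

Lemma coneD x c1 c2 : cone x (c1 + c2) = cone x c1 + cone x c2.
Proof.
apply/ffunP=> A; rewrite !ffunE; case: ifP => _; last by rewrite addr0.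
by rewrite ?ffunE mulrDr.
Qed.

Lemma coneN x c : cone x (- c) = - cone x c.
Proof.
apply/ffunP=> A; rewrite !ffunE; case: ifP => _; last by rewrite oppr0.
by rewrite ?ffunE mulrN.
Qed.

Lemma cone0 x : cone x 0 = 0.
Proof. by apply/ffunP=> A; rewrite !ffunE; case: ifP => _ //; rewrite ?ffunE mulr0. Qed.

Definition cnt (A : {set T}) (v : T) := #|[set u in A | (enum_rank u < enum_rank v)%N]|.

Lemma cntU1 (A : {set T}) y v : y \notin A ->
  cnt (y |: A) v = ((enum_rank y < enum_rank v)%N + cnt A v)%N.
Proof.
move=> yA; rewrite /cnt.
case Py: (enum_rank y < enum_rank v)%N.
  have -> : [set u in y |: A | (enum_rank u < enum_rank v)%N] =
            y |: [set u in A | (enum_rank u < enum_rank v)%N].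
    by apply/setP=> u; rewrite !inE; case: (u =P y) => [->|_]; rewrite ?eqxx ?Py ?(negbTE yA) //=.
  by rewrite cardsU1 inE (negbTE yA).
have -> : [set u in y |: A | (enum_rank u < enum_rank v)%N] =
          [set u in A | (enum_rank u < enum_rank v)%N].
  by apply/setP=> u; rewrite !inE; case: (u =P y) => [->|_]; rewrite ?eqxx ?Py ?(negbTE yA) ?andbF //=.
by [].
Qed.

Lemma vsignE (v : T) (A : {set T}) : vsign K v A = (-1) ^+ cnt A v.
Proof. by []. Qed.

Lemma setD1U1 (B : {set T}) v x : v != x -> (v |: B) :\ x = v |: (B :\ x).
Proof.
move=> vx; apply/setP=> u; rewrite !inE.
by case: (u =P v) => [->|]; rewrite ?vx ?andbT //.
Qed.

Lemma sgn_aux (a b c d : nat) : (a + b = 1)%N ->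
  (-1) ^+ (a + c) * (-1) ^+ (b + d) = - ((-1) ^+ d * (-1) ^+ c) :> K.
Proof.
move=> h; rewrite -exprD addnACA h exprD expr1 mulN1r -exprD addnC.
by [].
Qed.

Lemma sign_swap x v (B : {set T}) : x \in B -> v \notin B ->
  vsign K v (v |: B) * vsign K x (v |: B) =
  - (vsign K x B * vsign K v (v |: (B :\ x))).
Proof.
move=> xB vB.
have vx : v != x by apply: contraNneq vB => ->.
have xBx : x \notin B :\ x by rewrite !inE eqxx.
have vBx : v \notin B :\ x by rewrite !inE negb_and vB orbT.
have eB : B = x |: (B :\ x) by rewrite setD1K.
rewrite !vsignE cntU1 // cntU1 // cntU1 //.
rewrite {1}eB cntU1 //.
have hr : ((enum_rank x < enum_rank v)%N + (enum_rank v < enum_rank x)%N = 1)%N.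
  have hne : enum_rank x != enum_rank v.
    by apply: contra_neq vx => /enum_rank_inj ->.
  case: (ltngtP (enum_rank x) (enum_rank v)) => // /val_inj hh.
  by rewrite hh eqxx in hne.
rewrite ltnn add0n.
exact: sgn_aux.
Qed.


Lemma cone_bd x c : nox x c -> boundary (cone x c) = c - cone x (boundary c).
Proof.
move=> hc; apply/ffunP=> B.
rewrite [LHS]ffunE [RHS]ffunE [X in _ = _ + X]ffunE [X in _ = _ - X]ffunE.
case xB: (x \in B).
  rewrite hc // sub0r [boundary c _]ffunE.
  rewrite [X in _ = - (_ * X)](bigD1 x) /=; last by rewrite !inE eqxx.
  rewrite setD1K // hc // mulr0 add0r mulr_sumr -sumrN.
  apply: eq_big => [v|v vB].
    rewrite !inE negb_and negbK.
    by case: (v =P x) => [->|_]; rewrite ?xB ?eqxx ?andbT ?andbF.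
  have vx : v != x by apply: contraNneq vB => ->.
  rewrite ffunE !inE xB orbT setD1U1 // mulrA sign_swap //.
  by rewrite mulNr mulrA.
rewrite (bigD1 x) /=; last by rewrite xB.
rewrite ffunE setU11 mulrA vsign_sq mul1r setU1K ?xB //.
rewrite big1 ?addr0 ?subr0 // => v /andP [vB vx].
by rewrite ffunE !inE eq_sym (negbTE vx) xB mulr0.
Qed.


Lemma addE c1 c2 A : (c1 + c2) A = c1 A + c2 A.
Proof. by rewrite ffunE. Qed.
Lemma oppE c A : (- c) A = - c A.
Proof. by rewrite ffunE. Qed.
Lemma subE c1 c2 A : (c1 - c2) A = c1 A - c2 A.
Proof. by rewrite addE oppE. Qed.
Lemma zeroE A : (0 : chain T K) A = 0.
Proof. by rewrite ffunE. Qed.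

Lemma decomp x z : z = rest x z + cone x (link x z).
Proof.
apply/ffunP=> A; rewrite !ffunE; case: ifP => xA; rewrite ?add0r ?addr0 //.
by rewrite ?ffunE !inE eqxx /= setD1K // mulrA vsign_sq mul1r.
Qed.

Lemma nox_rest x z : nox x (rest x z).
Proof. by move=> A xA; rewrite ffunE xA. Qed.

Lemma nox_link x z : nox x (link x z).
Proof. by move=> A xA; rewrite ffunE xA. Qed.

Lemma nox_bd x c : nox x c -> nox x (boundary c).
Proof.
move=> h A xA; rewrite ffunE big1 // => v _.
by rewrite h ?mulr0 // inE xA orbT.
Qed.

Lemma bd_decomp x z : boundary z =
  boundary (rest x z) + (link x z - cone x (boundary (link x z))).
Proof. by rewrite {1}(decomp x z) boundaryD cone_bd //; apply: nox_link. Qed.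

Lemma supp0 S k : supported e S k (0 : chain T K).
Proof. by move=> A; rewrite ffunE eqxx. Qed.

Lemma suppD S k c1 c2 : supported e S k c1 -> supported e S k c2 ->
  supported e S k (c1 + c2).
Proof.
move=> h1 h2 A; rewrite ffunE => h.
case: (c1 A =P 0) => [h0|/eqP]; last exact: h1.
by apply: h2; rewrite h0 add0r in h.
Qed.

Lemma suppN S k c : supported e S k c -> supported e S k (- c).
Proof. by move=> h A; rewrite ffunE oppr_eq0; apply: h. Qed.

Lemma face_mono S S' k A : S \subset S' -> face e S k A -> face e S' k A.
Proof.
by move=> sS /and3P [hA hi hk]; apply/and3P; split => //; apply: subset_trans sS.
Qed.

Lemma supp_mono S S' k c : S \subset S' -> supported e S k c -> supported e S' k c.
Proof. by move=> sS h A hA; apply: face_mono sS (h A hA). Qed.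

Lemma indep_sub A B : A \subset B -> independent e B -> independent e A.
Proof.
move=> sAB /forallP hB; apply/forallP => a; apply/implyP => aA.
have := hB a; rewrite (subsetP sAB a aA) /= => /forallP hb.
apply/forallP => b; apply/implyP => bA.
by have := hb b; rewrite (subsetP sAB b bA).
Qed.

Lemma indepU1 x B : (forall y, y \in B -> ~~ e x y) -> independent e B ->
  independent e (x |: B).
Proof.
move=> hx /forallP hB; apply/forallP => a; apply/implyP => /setU1P aA.
apply/forallP => b; apply/implyP => /setU1P bA.
case: aA => [->|aB]; case: bA => [->|bB].
- by rewrite eirr.
- exact: hx.
- by rewrite esy; apply: hx.
- by have := hB a; rewrite aB /= => /forallP /(_ b); rewrite bB.
Qed.

Lemma face_cone S k x B : x \in S -> face e S k B -> x \notin B ->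
  (forall y, y \in B -> ~~ e x y) -> face e S k.+1 (x |: B).
Proof.
move=> xS /and3P [hB hi /eqP hk] xB hx; apply/and3P; split.
- by rewrite subUset sub1set xS.
- exact: indepU1.
- by rewrite cardsU1 xB hk.
Qed.

Lemma cone_supp S k x c : x \in S -> supported e S k c ->
  (forall B, c B != 0 -> x \notin B /\ forall y, y \in B -> ~~ e x y) ->
  supported e S k.+1 (cone x c).
Proof.
move=> xS hs hc A; rewrite ffunE; case: ifP => xA; last by rewrite eqxx.
rewrite mulf_eq0 negb_or => /andP [_ h].
have [hx hy] := hc _ h.
rewrite -(setD1K xA); apply: face_cone => //; exact: hs.
Qed.

Lemma not_redhom S k : ~ redhom_nonzero e K S k -> forall z,
  supported e S k z -> boundary z = 0 ->
  exists c, supported e S k.+1 c /\ boundary c = z.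
Proof. by move=> H z hs hb; apply: NNPP => hn; apply: H; exists z; split. Qed.

Lemma iso_noredhom S k x : x \in S -> (forall y, y \in S -> ~~ e x y) ->
  ~ redhom_nonzero e K S k.
Proof.
move=> xS hx [z [hs hb hn]]; apply: hn.
set z0 := rest x z; set u := link x z.
have hu : u = - boundary z0.
  apply/ffunP => B; rewrite [RHS]ffunE.
  case xB: (x \in B).
    by rewrite nox_link // (nox_bd (@nox_rest x z)) // oppr0.
  have := congr1 (fun f : chain T K => f B) (bd_decomp x z); rewrite hb.
  rewrite !ffunE xB subr0 -/z0 -/u => /esym/eqP.
  by rewrite addrC addr_eq0 => /eqP.
exists (cone x z0); split.
  apply: cone_supp => //.
    move=> A; rewrite ffunE; case: ifP => _; [by rewrite eqxx | exact: hs].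
  move=> B; rewrite ffunE; case: ifP => xB; first by rewrite eqxx.
  move=> hB; split => // y yB.
  have := hs _ hB => /and3P [sB _ _].
  by apply: hx; apply: (subsetP sB).
rewrite cone_bd; last exact: nox_rest.
by rewrite [RHS](decomp x z) -/z0 -/u hu coneN.
Qed.

Lemma face_link S k x B : face e S k.+1 (x |: B) -> x \notin B ->
  face e (S :\: (x |: [set y | e x y])) k B.
Proof.
move=> /and3P [hS hi /eqP hk] xB; apply/and3P; split.
- apply/subsetP => b bB; rewrite !inE negb_or.
  have bx : b != x by apply: contraNneq xB => <-.
  rewrite bx /=.
  have := hi; move=> /forallP /(_ x); rewrite setU11 /= => /forallP /(_ b).
  rewrite inE bB orbT /= => -> /=.
  by apply: (subsetP hS); rewrite inE bB orbT.
- by apply: indep_sub hi; apply: subsetUr.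
- by rewrite cardsU1 xB add1n in hk; case: hk => ->.
Qed.

Lemma face_del S k x A : face e S k A -> x \notin A -> face e (S :\ x) k A.
Proof.
move=> /and3P [hS hi hk] xA; apply/and3P; split => //.
apply/subsetP => a aA; rewrite !inE (subsetP hS a aA) andbT.
by apply: contraNneq xA => <-.
Qed.

Lemma split_redhom S j x : x \in S -> redhom_nonzero e K S j.+1 ->
  redhom_nonzero e K (S :\ x) j.+1 \/
  redhom_nonzero e K (S :\: (x |: [set y | e x y])) j.
Proof.
move=> xS [z [hs hb hn]]; apply: NNPP => /not_or_and [h1 h2]; apply: hn.
set N := S :\: (x |: [set y | e x y]).
set z0 := rest x z; set u := link x z.
have hus : supported e N j u.
  move=> B; rewrite ffunE; case: ifP => xB; first by rewrite eqxx.
  rewrite mulf_eq0 negb_or => /andP [_ hzB].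
  by apply: face_link; [apply: hs | rewrite xB].
have hbu : boundary u = 0.
  apply/ffunP => B; rewrite [RHS]ffunE.
  case xB: (x \in B); first by rewrite (nox_bd (@nox_link x z)).
  have := congr1 (fun f : chain T K => f (x |: B)) (bd_decomp x z); rewrite hb.
  rewrite zeroE addE subE (nox_bd (@nox_rest x z) (setU11 x B)).
  rewrite (@nox_link x z _ (setU11 x B)) ffunE setU11 setU1K ?xB //.
  rewrite add0r sub0r.
  move/esym/eqP; rewrite oppr_eq0 mulf_eq0 (negbTE (vsign_neq0 _ _)) /=.
  by move/eqP.
have [c [hcs hcb]] := not_redhom h2 hus hbu.
have hcN : forall A, c A != 0 -> A \subset N.
  by move=> A hA; have := hcs _ hA => /and3P [].
have hcnox : nox x c.
  move=> A xA; apply/eqP; apply: contraT => hA.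
  have := subsetP (hcN _ hA) x xA; by rewrite !inE eqxx.
have sNS : N \subset S :\ x.
  apply/subsetP => y; rewrite !inE negb_or => /andP [/andP [-> _] ->].
  by [].
have hzc : supported e (S :\ x) j.+1 (z0 + c).
  apply: suppD; last exact: supp_mono sNS hcs.
  move=> A; rewrite ffunE; case: ifP => xA; first by rewrite eqxx.
  by move=> hA; apply: face_del; [apply: hs | rewrite xA].
have hzb : boundary (z0 + c) = 0.
  rewrite boundaryD hcb.
  by have := bd_decomp x z; rewrite hb hbu cone0 subr0 => <-.
have [c' [hc's hc'b]] := not_redhom h1 hzc hzb.
exists (c' - cone x c); split.
  apply: suppD; first by apply: supp_mono hc's; apply: subD1set.
  apply: suppN; apply: cone_supp => //.
    by apply: supp_mono hcs; apply: subset_trans sNS (subD1set S x).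
  move=> B hB; have sB := hcN _ hB; split.
    by apply/negP => /(subsetP sB); rewrite !inE eqxx.
  move=> y /(subsetP sB); rewrite !inE negb_or => /andP [/andP [_ ->] _].
  by [].
rewrite boundaryB hc'b cone_bd // hcb [RHS](decomp x z) -/z0 -/u.
by rewrite opprB (addrC (cone x u)) addrA addrK.
Qed.

Lemma redhom0 S : redhom_nonzero e K S 0 -> S = set0.
Proof.
move=> [z [hs hb hn]]; apply/eqP; apply: contraT => /set0Pn [x xS].
exfalso; apply: hn.
have h0 : forall B, z B != 0 -> B = set0.
  by move=> B hB; have := hs _ hB => /and3P [_ _ /eqP /cards0_eq].
have hnox : nox x z.
  move=> A xA; apply/eqP; apply: contraT => /h0 hA.
  by rewrite hA inE in xA.
exists (cone x z); split.
  by apply: cone_supp => // B /h0 ->; split => [|y]; rewrite inE.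
by rewrite cone_bd // hb cone0 subr0.
Qed.

Lemma redhom_set0 k : redhom_nonzero e K set0 k -> k = 0%N.
Proof.
case: k => // j [z [hs hb hn]]; exfalso; apply: hn; exists 0; split.
  exact: supp0.
rewrite boundary0; apply/ffunP => A; rewrite ffunE; apply/esym/eqP.
apply: contraT => h; have := hs _ h.
by rewrite /face subset0 => /and3P [/eqP -> _]; rewrite cards0.
Qed.

End Hom.

Section G1.
Variable T : finType.
Variable e : rel T.
Hypothesis esy : symmetric e.
Hypothesis eirr : irreflexive e.
Implicit Types (A B S : {set T}) (M P : {set {set T}}) (x v y t a b c d g w u p q r z : T).

Local Notation NC x := (x |: [set y | e x y]).

Lemma inNC x t : (t \in NC x) = (t == x) || e x t.
Proof. by rewrite !inE. Qed.

Lemma neq_e a b : e a b -> a != b.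
Proof. by apply: contraTneq => ->; rewrite eirr. Qed.

Lemma matchingP M : reflect ((forall A, A \in M -> is_edge e A) /\
   (forall A B, A \in M -> B \in M -> A != B -> [disjoint A & B])) (matching e M).
Proof.
apply: (iffP andP) => [[/forallP h1 /forallP h2]|[h1 h2]]; split.
- by move=> A AM; have := h1 A; rewrite AM.
- move=> A B AM BM AB; have := h2 A; rewrite AM /= => /forallP /(_ B).
  by rewrite BM AB.
- by apply/forallP => A; apply/implyP; apply: h1.
- apply/forallP => A; apply/implyP => AM; apply/forallP => B; apply/implyP => BM.
  by apply/implyP; apply: h2.
Qed.

Lemma is_edgeP A : reflect (exists a b, A = [set a; b] /\ e a b) (is_edge e A).
Proof.
apply: (iffP existsP) => [[a /existsP [b /andP [/eqP -> h]]]|[a [b [-> h]]]].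
  by exists a, b.
by exists a; apply/existsP; exists b; rewrite eqxx.
Qed.

Lemma card_edge A : is_edge e A -> #|A| = 2.
Proof. by move/is_edgeP => [a [b [-> h]]]; rewrite cards2 neq_e. Qed.

Lemma match_union M1 M2 : matching e M1 -> matching e M2 ->
  (forall A B, A \in M1 -> B \in M2 -> [disjoint A & B]) ->
  matching e (M1 :|: M2) /\ #|M1 :|: M2| = #|M1| + #|M2|.
Proof.
move=> /matchingP [h1 h1'] /matchingP [h2 h2'] hd; split.
  apply/matchingP; split.
    by move=> A /setUP [] ?; [apply: h1 | apply: h2].
  move=> A B /setUP [] hA /setUP [] hB AB.
  - exact: h1'.
  - exact: hd.
  - by rewrite disjoint_sym; apply: hd.
  - exact: h2'.
rewrite cardsU.
suff -> : M1 :&: M2 = set0 by rewrite cards0 subn0.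
apply/setP => A; rewrite !inE; apply/negP => /andP [hA hB].
have := hd A A hA hB; rewrite -setI_eq0 setIid => /eqP A0.
by have := card_edge (h1 A hA); rewrite A0 cards0.
Qed.

Lemma match1 a b : e a b -> matching e [set [set a; b]].
Proof.
move=> h; apply/matchingP; split.
  by move=> A; rewrite inE => /eqP ->; apply/is_edgeP; exists a, b.
by move=> A B; rewrite !inE => /eqP -> /eqP ->; rewrite eqxx.
Qed.

Lemma match_add M a b : matching e M -> e a b ->
  (forall A, A \in M -> (a \notin A) && (b \notin A)) ->
  matching e ([set a; b] |: M) /\ #|[set a; b] |: M| = #|M|.+1.
Proof.
move=> hM hab hA.
have [] := @match_union [set [set a; b]] M (match1 hab) hM.
  move=> A B; rewrite inE => /eqP -> /hA /andP [aB bB].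
  rewrite disjoints_subset; apply/subsetP => u.
  by rewrite !inE => /orP [] /eqP ->.
by rewrite cards1 add1n.
Qed.

Definition msub S : nat :=
  \max_(M | matching e M && [forall A in M, A \subset S]) #|M|.

Lemma msub_le S M : matching e M -> (forall A, A \in M -> A \subset S) ->
  #|M| <= msub S.
Proof.
move=> hM hS; apply: (@leq_bigmax_cond _ (fun M => matching e M && [forall A in M, A \subset S])).
by rewrite hM /=; apply/forallP => A; apply/implyP; apply: hS.
Qed.

Lemma msub_ex S : exists M, [/\ matching e M, forall A, A \in M -> A \subset S &
  #|M| = msub S].
Proof.
have h0 : 0 < #|[pred M | matching e M && [forall A in M, A \subset S]]|.
  apply/card_gt0P; exists set0; rewrite inE /=.
  apply/andP; split; first by apply/matchingP; split => A; rewrite inE.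
  by apply/forallP => A; rewrite inE.
have [M hM eqM] := eq_bigmax_cond (fun M : {set {set T}} => #|M|) h0.
move: hM; rewrite inE => /andP [hM /forallP hS].
exists M; split => //; first by move=> A AM; have := hS A; rewrite AM.
Qed.

Lemma msub_mono S S' : S \subset S' -> msub S <= msub S'.
Proof.
move=> sS; have [M [hM hS <-]] := msub_ex S.
by apply: msub_le => // A /hS h; apply: subset_trans sS.
Qed.

Lemma msub_NC S x y : x \in S -> y \in S -> e x y -> (msub (S :\: NC x)).+1 <= msub S.
Proof.
move=> xS yS hxy; have [M [hM hS <-]] := msub_ex (S :\: NC x).
have hA : forall A, A \in M -> (x \notin A) && (y \notin A).
  move=> A /hS sA; apply/andP; split; apply/negP => /(subsetP sA); rewrite !inE.
    by rewrite eqxx.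
  by rewrite hxy orbT.
have [hM' hc] := @match_add M x y hM hxy hA.
rewrite -hc; apply: msub_le; first exact: hM'.
move=> A /setU1P [->|/hS sA].
  by rewrite subUset !sub1set xS yS.
by apply: subset_trans sA (subsetDl _ _).
Qed.

Lemma msub_mn S : msub S <= matching_number e.
Proof.
have [M [hM _ <-]] := msub_ex S.
exact: (@leq_bigmax_cond _ (fun M => matching e M)).
Qed.

Section Bound.
Variable K : fieldType.

Lemma reg_le_m S k : redhom_nonzero e K S k -> k <= msub S.
Proof.
have [n] := ubnP #|S|; elim: n S k => // n IH S k hn hr.
have [S0|[x xS]] := set_0Vmem S.
  by rewrite S0 in hr; rewrite (redhom_set0 hr).
case: k hr => // j hr.
have [/existsP [y /andP [yS hxy]]|hiso] := boolP [exists y in S, e x y].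
  case: (split_redhom esy eirr xS hr) => h.
    have hc : #|S :\ x| < n.
      by move: hn; rewrite (cardsD1 x S) xS add1n ltnS.
    apply: leq_trans (IH _ _ hc h) _; apply: msub_mono; exact: subD1set.
  have hc : #|S :\: NC x| < n.
    have hlt : #|S :\: NC x| < #|S|.
      rewrite (cardsD1 x S) xS add1n ltnS.
      apply: subset_leq_card; apply/subsetP => t; rewrite !inE negb_or.
      by case/andP => [/andP [-> _] ->].
    by apply: leq_trans hlt _; rewrite -ltnS.
  exact: leq_ltn_trans (IH _ _ hc h) (msub_NC xS yS hxy).
exfalso; apply: (iso_noredhom esy eirr xS _ hr) => y yS.
by move/existsPn: hiso => /(_ y); rewrite yS.
Qed.
End Bound.


Definition c5 a b c d g : bool := [&& uniq [:: a; b; c; d; g], e a b, e b c,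
  e c d, e d g, e g a, ~~ e a c, ~~ e a d, ~~ e b d, ~~ e b g & ~~ e c g].

Lemma c5_rot a b c d g : c5 a b c d g -> c5 b c d g a.
Proof.
move=> /and4P [u h1 h2 /and4P [h3 h4 h5 /and4P [n1 n2 n3 /andP [n4 n5]]]].
apply/and4P; split => //.
  by have := u; rewrite -(rot_uniq 1).
apply/and4P; split => //; apply/and4P; split => //.
by apply/andP; split; rewrite esy.
Qed.

Lemma set5_rot a b c d g : [set b; c; d; g; a] = [set a; b; c; d; g].
Proof. by apply/setP => t; rewrite !inE; case: (t == a); rewrite ?orbT ?orbF. Qed.

Lemma c5_uniq a b c d g : c5 a b c d g -> uniq [:: a; b; c; d; g].
Proof. by case/andP. Qed.

Lemma set5E a b c d g : [set a; b; c; d; g] = [set t in [:: a; b; c; d; g]].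
Proof. by apply/setP => t; rewrite !inE !orbA. Qed.

Lemma c5_ne13 a b c d g : c5 a b c d g -> a != c.
Proof. by move/c5_uniq; apply: contraTneq => ->; rewrite /= !inE eqxx ?orbT. Qed.
Lemma c5_ne14 a b c d g : c5 a b c d g -> a != d.
Proof. by move/c5_uniq; apply: contraTneq => ->; rewrite /= !inE eqxx ?orbT. Qed.
Lemma c5_ne25 a b c d g : c5 a b c d g -> b != g.
Proof. by move/c5_uniq; apply: contraTneq => ->; rewrite /= !inE eqxx ?orbT ?andbF. Qed.

Lemma card_c5 a b c d g : c5 a b c d g -> #|[set a; b; c; d; g]| = 5.
Proof.
move/c5_uniq => u.
have -> : [set a; b; c; d; g] = [set t in [:: a; b; c; d; g]].
  by apply/setP => t; rewrite !inE !orbA.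
by rewrite cardsE; move/card_uniqP: u => ->.
Qed.

Lemma c5_match0 a b c d g : c5 a b c d g -> exists M, [/\ matching e M, #|M| = 2 &
  forall A, A \in M -> A \subset [set a; b; c; d; g] /\ a \notin A].
Proof.
move=> h; have := h => /and4P [u h1 h2 /and4P [h3 h4 h5 _]].
move: u; rewrite /= !inE !negb_or => /and5P [/and4P [ab ac ad ag] /and3P [bc bd bg]
  /andP [cd cg] dg _].
have hA : forall A, A \in [set [set d; g]] -> (b \notin A) && (c \notin A).
  move=> A; rewrite inE => /eqP ->; rewrite !inE !negb_or.
  by rewrite bd bg cd cg.
have [hM hc] := @match_add _ b c (match1 h4) h2 hA.
exists ([set b; c] |: [set [set d; g]]); split => //; first by rewrite hc cards1.
move=> A /setU1P [->|]; last rewrite inE => /eqP ->.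
  split; first by apply/subsetP => t; rewrite !inE => /orP [] /eqP ->; rewrite eqxx ?orbT.
  by rewrite !inE negb_or ab ac.
split; first by apply/subsetP => t; rewrite !inE => /orP [] /eqP ->; rewrite eqxx ?orbT.
by rewrite !inE negb_or ad ag.
Qed.

Lemma c5_match w a b c d g : c5 a b c d g -> w \in [set a; b; c; d; g] ->
  exists M, [/\ matching e M, #|M| = 2 &
  forall A, A \in M -> A \subset [set a; b; c; d; g] /\ w \notin A].
Proof.
move=> h hw; have : w \in [set t in [:: a; b; c; d; g]] by rewrite -set5E.
clear hw; rewrite !inE => /orP [/eqP ->|/orP [/eqP ->|/orP [/eqP ->|/orP [/eqP ->|/eqP ->]]]].
- exact: c5_match0.
- by rewrite -(set5_rot a); apply: c5_match0; apply: c5_rot.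
- by rewrite -(set5_rot a) -(set5_rot b); apply: c5_match0; do 2 apply: c5_rot.
- by rewrite -(set5_rot a) -(set5_rot b) -(set5_rot c); apply: c5_match0; do 3 apply: c5_rot.
- by rewrite -(set5_rot a) -(set5_rot b) -(set5_rot c) -(set5_rot d); apply: c5_match0; do 4 apply: c5_rot.
Qed.


Definition isC5 B := exists a b c d g, c5 a b c d g /\ B = [set a; b; c; d; g].
Definition blockok B := is_edge e B \/ isC5 B.
Definition config P := (forall B, B \in P -> blockok B) /\
  (forall B1 B2, B1 \in P -> B2 \in P -> B1 != B2 ->
     [disjoint B1 & B2] /\ (forall u v, u \in B1 -> v \in B2 -> ~~ e u v)).
Definition cover P := \bigcup_(B in P) B.
Definition value P := \sum_(B in P) #|B| %/ 2.

Lemma coverP t P : reflect (exists2 B, B \in P & t \in B) (t \in cover P).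
Proof. exact: bigcupP. Qed.

Lemma isC5_card B : isC5 B -> #|B| = 5.
Proof. move=> [a [b [c [d [g [h ->]]]]]]; exact: card_c5 h. Qed.

Lemma blockok_nonempty B : blockok B -> exists t, t \in B.
Proof.
case=> [/is_edgeP [a [b [-> _]]]|[a [b [c [d [g [_ ->]]]]]]].
  by exists a; rewrite !inE eqxx.
by exists a; rewrite !inE eqxx.
Qed.

Lemma config_sub P P' : P' \subset P -> config P -> config P'.
Proof.
move=> sP [h1 h2]; split.
  by move=> B /(subsetP sP); apply: h1.
by move=> B1 B2 /(subsetP sP) h /(subsetP sP) h'; apply: h2.
Qed.

Lemma config_same P B1 B2 t : config P -> B1 \in P -> B2 \in P ->
  t \in B1 -> t \in B2 -> B1 = B2.
Proof.
move=> [_ h] h1 h2 t1 t2; apply/eqP; apply: contraT => hne.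
have [/disjoint_setI0 hd _] := h _ _ h1 h2 hne.
have : t \in B1 :&: B2 by rewrite inE t1 t2.
by rewrite hd inE.
Qed.

Lemma config_noedge P B1 B2 u v : config P -> B1 \in P -> B2 \in P ->
  B1 != B2 -> u \in B1 -> v \in B2 -> ~~ e u v.
Proof. by move=> [_ h] h1 h2 hne; apply: (h _ _ h1 h2 hne).2. Qed.

Lemma value_del P B : B \in P -> value P = #|B| %/ 2 + value (P :\ B).
Proof. by move=> BP; rewrite /value (big_setD1 B BP). Qed.

Lemma cover_del P B t : config P -> B \in P -> t \in cover (P :\ B) ->
  t \in cover P /\ t \notin B.
Proof.
move=> hP BP /coverP [B' /setD1P [hne B'P] tB']; split.
  by apply/coverP; exists B'.
apply/negP => tB; have := config_same hP B'P BP tB' tB.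
by move/eqP; rewrite (negbTE hne).
Qed.

Lemma config_add P B : config P -> blockok B ->
  (forall t, t \in B -> t \notin cover P /\ forall s, s \in cover P -> ~~ e t s) ->
  [/\ config (B |: P), value (B |: P) = #|B| %/ 2 + value P &
      cover (B |: P) = B :|: cover P].
Proof.
move=> [h1 h2] hB hd.
have BP : B \notin P.
  apply/negP => BP; have [t tB] := blockok_nonempty hB.
  by have [/negP hn _] := hd t tB; apply: hn; apply/coverP; exists B.
split.
- split.
    by move=> B' /setU1P [->|]; [exact: hB | apply: h1].
  have hx : forall B2, B2 \in P -> [disjoint B & B2] /\
      (forall u v, u \in B -> v \in B2 -> ~~ e u v).
    move=> B2 B2P; split.
      rewrite disjoints_subset; apply/subsetP => u uB; rewrite inE.
      have [/negP hn _] := hd u uB; apply/negP => uB2; apply: hn.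
      by apply/coverP; exists B2.
    move=> u v uB vB2; have [_ hs] := hd u uB; apply: hs.
    by apply/coverP; exists B2.
  move=> B1 B2 /setU1P [->|B1P] /setU1P [->|B2P] hne.
  + by rewrite eqxx in hne.
  + exact: hx.
  + have [h h'] := hx B1 B1P; split; first by rewrite disjoint_sym.
    by move=> u v uB1 vB; rewrite esy; apply: h'.
  + exact: h2.
- by rewrite /value (big_setU1 _ BP).
- by rewrite /cover (big_setU1 _ BP).
Qed.


Lemma block_match B w : blockok B -> (w \in B -> isC5 B) ->
  exists MB, [/\ matching e MB, #|MB| = #|B| %/ 2 &
     forall A, A \in MB -> A \subset B /\ w \notin A].
Proof.
move=> hB hw.
have [hC|hnC] := classic (isC5 B).
  have := hC => [[a [b [c [d [g [h hBe]]]]]]].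
  case wB: (w \in B).
    rewrite hBe in wB; have [M [hM hc hA]] := c5_match h wB.
    exists M; split => //; first by rewrite hBe hc card_c5.
    by move=> A /hA; rewrite hBe.
  have aB : a \in [set a; b; c; d; g] by rewrite !inE eqxx.
  have [M [hM hc hA]] := c5_match h aB.
  exists M; split => //; first by rewrite hBe hc card_c5.
  move=> A /hA [sA _]; rewrite -hBe in sA; split => //.
  by apply/negP => /(subsetP sA); rewrite wB.
case: hB => // hE.
have wB : w \notin B by apply/negP => /hw.
have /is_edgeP [a [b [hBe hab]]] := hE.
exists [set B]; split.
- by rewrite hBe; apply: match1.
- by rewrite cards1 (card_edge hE).
- move=> A; rewrite inE => /eqP ->; split => //.
Qed.

Lemma cover_sub P P' : P' \subset P -> cover P' \subset cover P.
Proof.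
move=> sP; apply/subsetP => t /coverP [B BP tB]; apply/coverP; exists B => //.
exact: (subsetP sP).
Qed.

Lemma cfg_match P w : config P -> (forall B, B \in P -> w \in B -> isC5 B) ->
  exists M, [/\ matching e M, #|M| = value P &
    forall A, A \in M -> A \subset cover P /\ w \notin A].
Proof.
have [n] := ubnP #|P|; elim: n P => // n IH P hn hP hw.
have [P0|[B BP]] := set_0Vmem P.
  exists set0; split.
  - by apply/matchingP; split => A; rewrite inE.
  - by rewrite P0 cards0 /value big_set0.
  - by move=> A; rewrite inE.
set P' := P :\ B.
have hP' : config P' := config_sub (subD1set P B) hP.
have hn' : #|P'| < n by move: hn; rewrite (cardsD1 B P) BP add1n ltnS.
have hw' : forall B', B' \in P' -> w \in B' -> isC5 B'.
  by move=> B' /setD1P [_ h]; apply: hw.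
have [M' [hM' hc' hA']] := IH P' hn' hP' hw'.
have [MB [hMB hcB hAB]] := block_match (hP.1 B BP) (hw B BP).
have hd : forall A A2, A \in M' -> A2 \in MB -> [disjoint A & A2].
  move=> A A2 /hA' [sA _] /hAB [sA2 _].
  rewrite disjoints_subset; apply/subsetP => u uA; rewrite inE.
  have [_ uB] := cover_del hP BP (subsetP sA u uA).
  by apply/negP => /(subsetP sA2); apply/negP.
have [hM hc] := match_union hM' hMB hd.
exists (M' :|: MB); split => //.
  by rewrite hc hc' hcB (value_del BP) addnC.
move=> A /setUP [/hA' [sA wA]|/hAB [sA wA]]; split => //.
  by apply: subset_trans sA _; apply: cover_sub; apply: subD1set.
apply: subset_trans sA _; apply/subsetP => t tB; apply/coverP; by exists B.
Qed.


Lemma inSN S v t : t \in S :\: NC v -> [/\ t \in S, t != v & ~~ e v t].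
Proof. by rewrite !inE negb_or => /andP [/andP [h1 h2] h3]. Qed.

Lemma notin2 u p q : u != p -> u != q -> u \notin [set p; q].
Proof. by move=> h1 h2; rewrite !inE negb_or h1 h2. Qed.

Lemma neq_io (X : {set T}) u v : u \in X -> v \notin X -> u != v.
Proof. by move=> uX; apply: contraNneq => <-. Qed.

Lemma notin_sub A (X : {set T}) u : A \subset X -> u \notin X -> u \notin A.
Proof. by move=> sA; apply: contra; apply: (subsetP sA). Qed.

Lemma sub2 p q (X : {set T}) : p \in X -> q \in X -> [set p; q] \subset X.
Proof. by move=> hp hq; rewrite subUset !sub1set hp hq. Qed.

Ltac neqt := solve [ done
 | by apply: neq_e
 | by rewrite eq_sym; apply: neq_e
 | by apply: neq_e; rewrite esy
 | by rewrite eq_sym; apply: neq_e; rewrite esy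
 | match goal with H1 : is_true (?u \in ?X), H2 : is_true (?v \notin ?X)
     |- is_true (?u != ?v) => exact: (neq_io H1 H2) end
 | match goal with H1 : is_true (?u \in ?X), H2 : is_true (?v \notin ?X)
     |- is_true (?v != ?u) => by rewrite eq_sym; exact: (neq_io H1 H2) end ].

Section LemB.
Variables (S : {set T}) (j : nat).
Hypothesis Hm : msub S = j.+1.
Definition cok v P := [/\ config P, cover P \subset S :\: NC v & value P = j].
Hypothesis Hiso : forall v, v \in S -> exists2 y, y \in S & e v y.
Hypothesis Hex : forall v, v \in S -> exists P, cok v P.
Hypothesis Hbad : forall v P y, v \in S -> cok v P -> y \in S -> e v y ->
  exists2 t, t \in cover P & e y t.
Hypothesis HNI : forall v z, v \in S -> z \in S :\: NC v ->
  exists2 t, t \in S :\: NC v & e z t.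

Lemma nodom v y : v \in S -> y \in S -> e v y ->
  exists2 t, t \in S & e y t && (t \notin NC v).
Proof.
move=> vS yS vy; have [P hP] := Hex vS; have [t tP yt] := Hbad vS hP yS vy.
case: hP => _ hc _; have := subsetP hc t tP; rewrite inE => /andP [tn tS].
by exists t => //; rewrite yt tn.
Qed.

Lemma too_big M : matching e M -> (forall A, A \in M -> A \subset S) ->
  #|M| = j.+2 -> False.
Proof.
move=> hM hS hc; have := msub_le hM hS; rewrite hc Hm.
by rewrite ltnn.
Qed.

Lemma cokC v P t : cok v P -> t \in cover P -> [/\ t \in S, t != v & ~~ e v t].
Proof. by case=> _ hc _ tP; apply: inSN; apply: (subsetP hc). Qed.

Lemma cok_notin v P u : cok v P -> (u == v) || e v u -> u \notin cover P.
Proof.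
move=> hP hu; apply/negP => /(cokC hP) [_ h1 h2].
by case/orP: hu => [/eqP hu|hu]; [rewrite hu eqxx in h1 | rewrite hu in h2].
Qed.

Lemma noC5hit x P y y' t B : x \in S -> cok x P -> y \in S -> y' \in S ->
  e x y -> e x y' -> y != y' -> t \in B -> B \in P -> isC5 B -> e y t -> False.
Proof.
move=> xS hP yS y'S xy xy' yy' tB BP hC yt.
have hPc := hP; case: hPc => hPc hPS hPv.
have hw : forall B', B' \in P -> t \in B' -> isC5 B'.
  by move=> B' B'P tB'; rewrite (config_same hPc B'P BP tB' tB).
have [M [hM hcM hA]] := cfg_match hPc hw.
have tC : t \in cover P by apply/coverP; exists B.
have [tS tx xt] := cokC hP tC.
have xC : x \notin cover P by apply: cok_notin hP _; rewrite eqxx.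
have yC : y \notin cover P by apply: cok_notin hP _; rewrite xy orbT.
have y'C : y' \notin cover P by apply: cok_notin hP _; rewrite xy' orbT.
have h1 : forall A, A \in M -> (x \notin A) && (y' \notin A).
  by move=> A /hA [sA _]; rewrite !(notin_sub sA).
have [hM1 hc1] := match_add hM xy' h1.
have h2 : forall A, A \in [set x; y'] |: M -> (y \notin A) && (t \notin A).
  move=> A /setU1P [->|/hA [sA tA]]; last by rewrite tA (notin_sub sA).
  by rewrite !notin2 //; neqt.
have [hM2 hc2] := match_add hM1 yt h2.
apply: (too_big hM2); last by rewrite hc2 hc1 hcM hPv.
move=> A /setU1P [->|/setU1P [->|/hA [sA _]]]; first exact: sub2.
  exact: sub2.
apply: subset_trans sA _; apply: subset_trans hPS _; exact: subsetDl.
Qed.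


Lemma cover_S v P : cok v P -> cover P \subset S.
Proof. by case=> _ hc _; apply: subset_trans hc _; apply: subsetDl. Qed.

Lemma partner x P y y' a b r : x \in S -> cok x P -> y \in S -> y' \in S ->
  e x y -> e x y' -> y != y' -> [set a; b] \in P -> e a b -> e y a ->
  r \in S -> e b r -> (r == a) || (r == y) || (r == y').
Proof.
move=> xS hP yS y'S xy xy' yy' BP ab ya rS br.
apply: contraT; rewrite !negb_or => /andP [/andP [ra ry] ry'].
have hPc := hP; case: hPc => hPc hPS hPv.
set B := [set a; b] in BP *.
have aB : a \in B by rewrite !inE eqxx.
have bB : b \in B by rewrite !inE eqxx orbT.
have aC : a \in cover P by apply/coverP; exists B.
have bC : b \in cover P by apply/coverP; exists B.
have xC : x \notin cover P by apply: cok_notin hP _; rewrite eqxx.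
have yC : y \notin cover P by apply: cok_notin hP _; rewrite xy orbT.
have y'C : y' \notin cover P by apply: cok_notin hP _; rewrite xy' orbT.
have [aS _ _] := cokC hP aC.
have [bS _ nxb] := cokC hP bC.
have rC : r \notin cover P.
  apply/negP => /coverP [B' B'P rB'].
  have [hBB|hne] := eqVneq B' B.
    move: rB'; rewrite hBB !inE (negbTE ra) /= => /eqP hrb.
    by rewrite hrb eirr in br.
  have := config_noedge hPc BP B'P _ bB rB'; rewrite eq_sym hne br => /(_ isT).
  by [].
have rx : r != x by apply: contraTneq br => ->; rewrite esy.
set P' := P :\ B.
have hP' : config P' := config_sub (subD1set P B) hPc.
have hw : forall B', B' \in P' -> r \in B' -> isC5 B'.
  move=> B' B'P rB'; exfalso.
  have rC' : r \in cover P' by apply/coverP; exists B'.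
  by have [h _] := cover_del hPc BP rC'; rewrite h in rC.
have [M [hM hcM hA]] := cfg_match hP' hw.
have hcv : (#|M|).+1 = j.
  rewrite hcM -hPv (value_del BP) /B cards2 (neq_e ab).
  by [].
have nA : forall A u, A \in M -> (u \notin cover P) || (u \in B) -> u \notin A.
  move=> A u AM hu; apply/negP => uA.
  have [sA _] := hA A AM.
  have [h1 h2] := cover_del hPc BP (subsetP sA u uA).
  by case/orP: hu => hu; [rewrite h1 in hu | rewrite hu in h2].
have h1 : forall A, A \in M -> (x \notin A) && (y' \notin A).
  by move=> A AM; apply/andP; split; apply: nA => //; rewrite ?xC ?y'C.
have [hM1 hc1] := match_add hM xy' h1.
have h2 : forall A, A \in [set x; y'] |: M -> (y \notin A) && (a \notin A).
  move=> A /setU1P [->|AM]; first by rewrite !notin2 //; neqt.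
  by apply/andP; split; apply: nA => //; rewrite ?yC ?aB ?orbT.
have [hM2 hc2] := match_add hM1 ya h2.
have h3 : forall A, A \in [set y; a] |: ([set x; y'] |: M) ->
    (b \notin A) && (r \notin A).
  move=> A /setU1P [->|/setU1P [->|AM]].
  - rewrite !notin2 //; neqt.
  - by rewrite !notin2 //; neqt.
  - have [_ ->] := hA A AM; rewrite andbT; apply: nA => //; by rewrite bB orbT.
have [hM3 hc3] := match_add hM2 br h3.
exfalso; apply: (too_big hM3); last by rewrite hc3 hc2 hc1 hcv.
move=> A /setU1P [->|/setU1P [->|/setU1P [->|AM]]]; try exact: sub2.
have [sA _] := hA A AM.
apply: subset_trans sA _; apply: subset_trans (cover_sub (subD1set P B)) _.
exact: cover_S hP.
Qed.


Lemma lemB x : x \in S -> exists y1 y2 w w', exists P,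
  [/\ cok x P, [set w; w'] \in P, c5 x y1 w w' y2 &
       [&& y1 \in S, y2 \in S, w \in S & w' \in S]] /\
  [/\ forall t, t \in S -> e x t -> (t == y1) || (t == y2),
      forall t, t \in S -> e w t -> (t == w') || (t == y1) &
      forall t, t \in S -> e w' t -> (t == w) || (t == y2)].
Proof.
move=> xS.
have [P hP] := Hex xS.
have [y1 y1S xy1] := Hiso xS.
have y1x : e y1 x by rewrite esy.
have [y2 y2S /andP [xy2 y2n]] := nodom y1S xS y1x.
move: y2n; rewrite inNC negb_or => /andP [y21 ny12].
have y12 : y1 != y2 by rewrite eq_sym.
have [w wC y1w] := Hbad xS hP y1S xy1.
have /coverP [B BP wB] := wC.
have hPc := hP; case: hPc => hPc hPS hPv.
have hE : is_edge e B.
  case: (hPc.1 B BP) => // hC; exfalso.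
  exact: (noC5hit xS hP y1S y2S xy1 xy2 y12 wB BP hC y1w).
have [w' [hBw ww']] : exists w', B = [set w; w'] /\ e w w'.
  move/is_edgeP: hE => [a [b [hBe hab]]].
  move: wB; rewrite hBe !inE => /orP [/eqP ->|/eqP ->].
    by exists b.
  by exists a; split; [rewrite setUC | rewrite esy].
rewrite hBw in BP.
have w'C : w' \in cover P by apply/coverP; exists [set w; w'] => //; rewrite !inE eqxx orbT.
have [wS wx nxw] := cokC hP wC.
have [w'S w'x nxw'] := cokC hP w'C.
have xC : x \notin cover P by apply: cok_notin hP _; rewrite eqxx.
have y1C : y1 \notin cover P by apply: cok_notin hP _; rewrite xy1 orbT.
have y2C : y2 \notin cover P by apply: cok_notin hP _; rewrite xy2 orbT.
have HN4 : forall y', y' \in S -> e x y' -> y' != y1 -> forall r, r \in S ->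
    e w' r -> (r == w) || (r == y1) || (r == y').
  move=> y' y'S xy' y'1 r rS w'r.
  by apply: (partner xS hP y1S y'S xy1 xy' _ BP ww' y1w rS w'r); rewrite eq_sym.
have hx12 : forall t, t \in S -> e x t -> (t == y1) || (t == y2).
  move=> t tS xt; apply: contraT; rewrite negb_or => /andP [t1 t2].
  have [r rS /andP [w'r rn]] := nodom wS w'S ww'.
  move: rn; rewrite inNC negb_or => /andP [rw nwr].
  have ry1 : r != y1 by apply: contraNneq nwr => ->; rewrite esy.
  have h1 := HN4 y2 y2S xy2 y21 r rS w'r.
  have h2 := HN4 t tS xt t1 r rS w'r.
  rewrite (negbTE rw) (negbTE ry1) /= in h1 h2.
  move/eqP: h1 => h1; move/eqP: h2 => h2.
  by rewrite -h2 -h1 eqxx in t2.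
have hw'N := HN4 y2 y2S xy2 y21.
have nw'y1 : ~~ e w' y1.
  apply/negP => w'y1.
  have [r rS /andP [w'r rn]] := nodom wS w'S ww'.
  move: rn; rewrite inNC negb_or => /andP [rw nwr].
  have ry1 : r != y1 by apply: contraNneq nwr => ->; rewrite esy.
  have := hw'N r rS w'r; rewrite (negbTE rw) (negbTE ry1) /= => /eqP hr.
  rewrite hr in w'r.
  have xN : x \in S :\: NC w' by rewrite !inE negb_or xS andbT eq_sym w'x /= esy.
  have [t tN xt] := HNI w'S xN.
  have [tS _ nw't] := inSN tN.
  case/orP: (hx12 t tS xt) => /eqP ht; rewrite ht in nw't.
    by rewrite w'y1 in nw't.
  by rewrite w'r in nw't.
have [w'y2 nwy2] : e w' y2 /\ ~~ e w y2.
  have [r rS /andP [w'r rn]] := nodom wS w'S ww'.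
  move: rn; rewrite inNC negb_or => /andP [rw nwr].
  have ry1 : r != y1 by apply: contraTneq w'r => ->.
  have := hw'N r rS w'r; rewrite (negbTE rw) (negbTE ry1) /= => /eqP hr.
  by split; rewrite -hr.
have hw'2 : forall t, t \in S -> e w' t -> (t == w) || (t == y2).
  move=> t tS w't.
  case/orP: (hw'N t tS w't) => [/orP [h|/eqP h]|h].
  - by rewrite h.
  - by rewrite -h w't in nw'y1.
  - by rewrite h orbT.
have hwN : forall t, t \in S -> e w t -> (t == w') || (t == y1).
  move=> t tS wt.
  have BP' : [set w'; w] \in P by rewrite setUC.
  have w'w : e w' w by rewrite esy.
  have y2w' : e y2 w' by rewrite esy.
  case/orP: (partner xS hP y2S y1S xy2 xy1 y21 BP' w'w y2w' tS wt) => [/orP [h|/eqP h]|h].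
  - by rewrite h.
  - by rewrite -h wt in nwy2.
  - by rewrite h orbT.
exists y1, y2, w, w', P; split; split => //.
  rewrite /c5 /= !inE !negb_or.
  repeat (apply/andP; split).
  all: try solve [neqt | done | by rewrite esy].
by rewrite y1S y2S wS w'S.
Qed.


Lemma closeC v a b q z : v \in S -> a \in S ->
  (forall t, t \in S -> e v t -> (t == a) || (t == b)) ->
  (forall t, t \in S -> e a t -> (t == v) || (t == q)) ->
  z \in S -> e q z -> z != a ->
  forall t, t \in S -> e q t -> (t == z) || (t == a).
Proof.
move=> vS aS hNv hNa zS qz za.
have [p1 [p2 [u [u' [Pv [[_ _ hc hS] [_ hu hu']]]]]]] := lemB vS.
move: hS => /and4P [p1S p2S uS u'S].
have vu := c5_ne13 hc; have vu' := c5_ne14 hc; have p12 := c5_ne25 hc.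
move: hc => /and4P [_ vp1 p1u /and4P [uu' u'p2 p2v _]].
case/orP: (hNv p1 p1S vp1) => [/eqP h1|h1].
  rewrite h1 in p1u.
  case/orP: (hNa u uS p1u) => /eqP hu0; first by rewrite hu0 eqxx in vu.
  rewrite -hu0 in qz *.
  have := hu z zS qz; rewrite h1 (negbTE za) orbF => /eqP hz'.
  by move=> t tS ut; have := hu t tS ut; rewrite -hz' h1.
have vp2 : e v p2 by rewrite esy.
case/orP: (hNv p2 p2S vp2) => [/eqP h2|h2].
  have au' : e a u' by rewrite -h2 esy.
  case/orP: (hNa u' u'S au') => /eqP hu0; first by rewrite hu0 eqxx in vu'.
  rewrite -hu0 in qz *.
  have := hu' z zS qz; rewrite h2 (negbTE za) orbF => /eqP hz'.
  by move=> t tS ut; have := hu' t tS ut; rewrite -hz' h2.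
by rewrite (eqP h1) (eqP h2) eqxx in p12.
Qed.

End LemB.


Section ClaimA.
Variable K : fieldType.

Lemma claimA S k : redhom_nonzero e K S k -> msub S = k ->
  exists P, [/\ config P, cover P \subset S & value P = k].
Proof.
have [n] := ubnP #|S|; elim: n S k => // n IH S k hn hr hm.
have [S0|[x0 x0S]] := set_0Vmem S.
  rewrite S0 in hr; rewrite (redhom_set0 hr) in hm *.
  exists set0; split.
  - by split => [B|B1 B2]; rewrite inE.
  - by rewrite /cover big_set0 sub0set.
  - by rewrite /value big_set0.
case: k hr hm => [hr|j hr] hm.
  by rewrite (redhom0 esy eirr hr) inE in x0S.
have cardD : forall v A, v \in S -> v \in A -> #|S :\: A| < n.
  move=> v A vS vA.
  have hlt : #|S :\: A| < #|S|.
    rewrite (cardsD1 v S) vS add1n ltnS.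
    apply: subset_leq_card; apply/subsetP => t; rewrite !inE.
    case/andP => tA ->; rewrite andbT; apply: contraNneq tA => ->; exact: vA.
  by apply: leq_trans hlt _; rewrite -ltnS.
case: (classic (exists v, v \in S /\ redhom_nonzero e K (S :\ v) j.+1)) =>
  [[v [vS hv]]|hno1].
  have hm' : msub (S :\ v) = j.+1.
    apply/eqP; rewrite eqn_leq (reg_le_m hv) andbT -hm.
    exact: msub_mono (subD1set S v).
  have [P [h1 h2 h3]] := IH (S :\ v) j.+1 (cardD v [set v] vS (set11 v)) hv hm'.
  by exists P; split => //; apply: subset_trans h2 (subD1set S v).
have Hiso : forall v, v \in S -> exists2 y, y \in S & e v y.
  move=> v vS; apply: NNPP => hne; apply: (iso_noredhom esy eirr vS _ hr).
  by move=> y yS; apply/negP => vy; apply: hne; exists y.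
have H2 : forall v, v \in S -> redhom_nonzero e K (S :\: NC v) j.
  move=> v vS; case: (split_redhom esy eirr vS hr) => // h; exfalso.
  by apply: hno1; exists v.
have Hex : forall v, v \in S -> exists P, cok S j v P.
  move=> v vS; have [y yS vy] := Hiso v vS.
  have hv := H2 v vS.
  have hm' : msub (S :\: NC v) = j.
    apply/eqP; rewrite eqn_leq (reg_le_m hv) andbT -ltnS -hm.
    exact: msub_NC vS yS vy.
  have [P [h1 h2 h3]] := IH _ j (cardD v (NC v) vS (setU11 v _)) hv hm'.
  by exists P; split.
have HNI : forall v z, v \in S -> z \in S :\: NC v ->
    exists2 t, t \in S :\: NC v & e z t.
  move=> v z vS zN; apply: NNPP => hne.
  apply: (iso_noredhom esy eirr zN _ (H2 v vS)) => y yN.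
  by apply/negP => zy; apply: hne; exists y.
case: (classic (exists v P y, [/\ v \in S, cok S j v P, y \in S, e v y &
    forall t, t \in cover P -> ~~ e y t])) => [[v [P [y [vS hP yS vy hy]]]]|hno2].
  have hPc := hP; case: hPc => hPc hPS hPv.
  have hB : blockok [set v; y] by left; apply/is_edgeP; exists v, y.
  have hd : forall t, t \in [set v; y] ->
      t \notin cover P /\ forall s, s \in cover P -> ~~ e t s.
    move=> t; rewrite !inE => /orP [] /eqP ->; split.
    - by apply: cok_notin hP _; rewrite eqxx.
    - by move=> s /(cokC hP) [].
    - by apply: cok_notin hP _; rewrite vy orbT.
    - exact: hy.
  have [hc hv hcov] := config_add hPc hB hd.
  exists ([set v; y] |: P); split => //.
    by rewrite hcov subUset sub2 //=; apply: cover_S hP.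
  by rewrite hv hPv cards2 (neq_e vy).
have Hbad : forall v P y, v \in S -> cok S j v P -> y \in S -> e v y ->
    exists2 t, t \in cover P & e y t.
  move=> v P y vS hP yS vy; apply: NNPP => hne; apply: hno2.
  exists v, P, y; split => // t tP; apply/negP => yt; apply: hne.
  by exists t.
have [y1 [y2 [w [w' [P [[hP BP hc5 hS] [hx hw hw']]]]]]] :=
  lemB hm Hiso Hex Hbad HNI x0S.
move: hS => /and4P [y1S y2S wS w'S].
have hc5' := hc5.
move: hc5' => /and4P [_ x0y1 y1w /and4P [ww' w'y2 y2x0 _]].
have x0w := c5_ne13 hc5; have x0w' := c5_ne14 hc5.
have y1x0 : e y1 x0 by rewrite esy.
have hy2 := closeC hm Hiso Hex Hbad HNI wS w'S hw hw' x0S y2x0 x0w'.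
have hy1 := closeC hm Hiso Hex Hbad HNI w'S wS hw' hw x0S y1x0 x0w.
set Q := [set x0; y1; w; w'; y2].
have closed : forall q t, q \in Q -> t \in S -> e q t -> t \in Q.
  move=> q t hq tS qt; rewrite /Q set5E in hq *; rewrite !inE in hq *.
  case/orP: hq => [/eqP hq|/orP [/eqP hq|/orP [/eqP hq|/orP [/eqP hq|/eqP hq]]]];
    rewrite hq in qt.
  - by case/orP: (hx t tS qt) => /eqP ->; rewrite eqxx ?orbT.
  - by case/orP: (hy1 t tS qt) => /eqP ->; rewrite eqxx ?orbT.
  - by case/orP: (hw t tS qt) => /eqP ->; rewrite eqxx ?orbT.
  - by case/orP: (hw' t tS qt) => /eqP ->; rewrite eqxx ?orbT.
  - by case/orP: (hy2 t tS qt) => /eqP ->; rewrite eqxx ?orbT.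
have hPc := hP; case: hPc => hPc hPS hPv.
set B := [set w; w'] in BP *.
have hP' : config (P :\ B) := config_sub (subD1set P B) hPc.
have hBQ : blockok Q by right; exists x0, y1, w, w', y2.
have sQ : forall s, s \in cover (P :\ B) -> s \in S /\ s \notin Q.
  move=> s sC; have [sC' sB] := cover_del hPc BP sC.
  have [sS sx nxs] := cokC hP sC'.
  split => //; rewrite /Q set5E !inE.
  move: sB; rewrite /B !inE negb_or => /andP [sw sw'].
  rewrite (negbTE sx) (negbTE sw) (negbTE sw') /=.
  apply/negP => /orP [] /eqP hs.
    by rewrite hs x0y1 in nxs.
  by rewrite hs esy y2x0 in nxs.
have hd : forall t, t \in Q ->
    t \notin cover (P :\ B) /\ forall s, s \in cover (P :\ B) -> ~~ e t s.
  move=> t tQ; split.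
    by apply/negP => /sQ [_]; rewrite tQ.
  move=> s /sQ [sS sQ']; apply/negP => ts.
  by rewrite (closed t s tQ sS ts) in sQ'.
have [hc hv hcov] := config_add hP' hBQ hd.
exists (Q |: (P :\ B)); split => //.
  rewrite hcov subUset; apply/andP; split.
    by rewrite /Q set5E; apply/subsetP => t; rewrite !inE =>
      /orP [/eqP ->|/orP [/eqP ->|/orP [/eqP ->|/orP [/eqP ->|/eqP ->]]]].
  apply: subset_trans (cover_sub (subD1set P B)) _; exact: cover_S hP.
rewrite hv /Q (card_c5 hc5).
move: hPv; rewrite (value_del BP) /B cards2 (neq_e ww') => <-.
by [].
Qed.

End ClaimA.

End G1.

Lemma exitP (T : finType) (e : rel T) (X : {set T}) a t : a \in X -> t \notin X ->
  connect e a t -> exists q z, [/\ q \in X, z \notin X & e q z].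
Proof.
move=> aX tX /connectP [p hp ht].
elim: p a aX hp ht => [|z p IH] a aX /= hp ht.
  by rewrite ht aX in tX.
move/andP: hp => [az hp].
case zX: (z \in X); first exact: IH z zX hp ht.
by exists a, z; split => //; rewrite zX.
Qed.

Theorem mainTheorem7 (K : fieldType) (T : finType) (e : rel T) (r : nat) :
  simple_graph e -> connected_graph e ->
  is_reg e K r ->
  (induced_matching_number e < r)%N ->
  r = matching_number e ->
  iso_C5 e.
Proof.
move=> [esy eirr] hconn [[S0 hS0] _] him hr.
have hmS0 : msub e S0 = r.
  apply/eqP; rewrite eqn_leq (reg_le_m esy eirr hS0) andbT hr; exact: msub_mn.
have [P [hP hPS hPv]] := claimA esy eirr hS0 hmS0.
case: (classic (exists2 Q, Q \in P & isC5 e Q)) => [[Q QP hQ]|hno]; last first.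
  exfalso.
  have hE : forall B, B \in P -> is_edge e B.
    move=> B BP; case: (hP.1 B BP) => // hC; exfalso; apply: hno; by exists B.
  have hval : value P = #|P|.
    rewrite /value -sum1_card; apply: eq_bigr => B BP.
    by rewrite (card_edge eirr (hE B BP)).
  have him' : induced_matching e P.
    apply/andP; split.
      apply/matchingP; split => //.
      by move=> A B AP BP AB; apply: (hP.2 A B AP BP AB).1.
    apply/forallP => A; apply/implyP => AP; apply/forallP => B; apply/implyP => BP.
    apply/implyP => AB; apply/forallP => x; apply/implyP => xA.
    apply/forallP => y; apply/implyP => yB.
    exact: (hP.2 A B AP BP AB).2 x y xA yB.
  have := @leq_bigmax_cond _ (fun M => induced_matching e M) (fun M => #|M|) P him'.
  by rewrite -/(induced_matching_number e) -hval hPv leqNgt him.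
have [a [b [c [d [g [h5 hQe]]]]]] := hQ.
have hall : forall t, t \in Q.
  move=> t; apply: NNPP => /negP tQ.
  have aQ : a \in Q by rewrite hQe !inE eqxx.
  have [q [z [qQ zQ qz]]] := exitP aQ tQ (hconn a t).
  have zC : z \notin cover P.
    apply/negP => /coverP [B' B'P zB'].
    have hne : Q != B' by apply: contraNneq zQ => ->.
    by have := config_noedge hP QP B'P hne qQ zB'; rewrite qz.
  have hw : forall B, B \in P -> q \in B -> isC5 e B.
    by move=> B BP qB; rewrite -(config_same hP QP BP qQ qB).
  have [M [hM hcM hA]] := cfg_match esy eirr hP hw.
  have hA' : forall A, A \in M -> (q \notin A) && (z \notin A).
    by move=> A AM; have [sA ->] := hA A AM; rewrite (notin_sub sA zC).
  have [hM' hc'] := match_add eirr hM qz hA'.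
  have := @leq_bigmax_cond _ (fun M => matching e M) (fun M => #|M|) _ hM'.
  by rewrite -/(matching_number e) -hr hc' hcM hPv ltnn.
set s := [:: a; b; c; d; g].
have us : uniq s := c5_uniq h5.
have ins : forall t, t \in s.
  by move=> t; have := hall t; rewrite hQe set5E inE.
pose f := fun t => (inord (index t s) : 'I_5).
pose h := fun i : 'I_5 => nth a s i.
have hf : cancel f h.
  move=> t; rewrite /h /f inordK ?nth_index //.
  by rewrite -[5]/(size s) index_mem.
have hh : cancel h f.
  move=> i; apply: ord_inj.
  have hi : i < size s by rewrite (ltn_ord i).
  rewrite /f /h; cbv beta; rewrite inordK (index_uniq a hi us) //.
have E : forall i j : 'I_5, e (h i) (h j) = C5rel i j.
  move: h5 => /and4P [_ ab bc /and4P [cd dg ga /and4P [nac nad nbd /andP [nbg ncg]]]].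
  case=> [[|[|[|[|[|i]]]]] hi] [[|[|[|[|[|j]]]]] hj] //=.
  all: rewrite /h /C5rel /=.
  all: try first [ by rewrite ?eirr ?(negbTE nac) ?(negbTE nad) ?(negbTE nbd)
                 ?(negbTE nbg) ?(negbTE ncg)
             | by rewrite esy ?(negbTE nac) ?(negbTE nad) ?(negbTE nbd)
                 ?(negbTE nbg) ?(negbTE ncg) ].
exists f; split; first by exists h.
by move=> x y; rewrite -E !hf.
Qed.
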